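(* Let $(\Omega,\mathcal{F})$ be a measurable space, $\mathrm{B}_b$ the space of bounded real-valued measurable functions, $C\subset\mathrm{B}_b$ a linear subspace containing the constants, and $H\colon C\to\mathbb{R}$ a convex map with $H(X+m)=H(X)+m$ for all $X\in C$, $m\in\mathbb{R}$. Then the following are equivalent: (i) $H$ is a monotone premium principle; (ii) $H(0)=0$ and $H(X)\le 0$ for all $X\in C$ with $X\le 0$.
   Context: A premium principle is a map $H\colon C\to\mathbb{R}$ with $H(X+m)=H(X)+m$ for $X\in C$, $m\in\mathbb{R}$, $H(0)=0$, and $H(X)\ge0$ for $X\in C$ with $X\ge0$, where $\le$ is the pointwise order. Monotone means $H(X)\le H(Y)$ whenever $X,Y\in C$, $X\le Y$. Convex means $H(\lambda X+(1-\lambda)Y)\le\lambda H(X)+(1-\lambda)H(Y)$ for $\lambda\in[0,1]$. *)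

(* Defs.v *)
From HB Require Import structures.
From mathcomp Require Import all_boot all_order all_algebra.
From mathcomp Require Import all_classical all_reals.
From mathcomp Require Import measure lebesgue_measure.
Set Implicit Arguments. Unset Strict Implicit. Unset Printing Implicit Defensive.
Import Order.TTheory GRing.Theory Num.Theory.
Local Open Scope ring_scope.
Local Open Scope classical_set_scope.

Section Defs.
Context {d : measure_display} {T : measurableType d} {R : realType}.

Definition bounded_measurable (X : T -> R) : Prop :=
  measurable_fun setT X /\ exists M : R, forall w, `|X w| <= M.

Definition linear_subspace_with_constants (C : set (T -> R)) : Prop :=
  [/\ (forall X, C X -> bounded_measurable X),
      (forall m : R, C (fun _ => m)),
      (forall X Y, C X -> C Y -> C (fun w => X w + Y w)) &
      (forall (a : R) X, C X -> C (fun w => a * X w))].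

Definition cash_additive_on (C : set (T -> R)) (H : (T -> R) -> R) : Prop :=
  forall X (m : R), C X -> H (fun w => X w + m) = H X + m.

Definition convex_on (C : set (T -> R)) (H : (T -> R) -> R) : Prop :=
  forall X Y (l : R), C X -> C Y -> 0 <= l <= 1 ->
    H (fun w => l * X w + (1 - l) * Y w) <= l * H X + (1 - l) * H Y.

Definition premium_principle (C : set (T -> R)) (H : (T -> R) -> R) : Prop :=
  [/\ cash_additive_on C H,
      H (fun _ => 0) = 0 &
      (forall X, C X -> (forall w, 0 <= X w) -> 0 <= H X)].

Definition monotone_on (C : set (T -> R)) (H : (T -> R) -> R) : Prop :=
  forall X Y, C X -> C Y -> (forall w, X w <= Y w) -> H X <= H Y.

End Defs.

(* Main.v *)
Require Import Defs.
From HB Require Import structures.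
From mathcomp Require Import all_boot all_order all_algebra.
From mathcomp Require Import all_classical all_reals.
From mathcomp Require Import measure lebesgue_measure.
From mathcomp Require Import ring lra.
Import Order.TTheory GRing.Theory Num.Theory.
Local Open Scope ring_scope.
Local Open Scope classical_set_scope.

Theorem proposition3p7 (d : measure_display) (T : measurableType d) (R : realType)
  (C : set (T -> R)) (H : (T -> R) -> R) :
  linear_subspace_with_constants C ->
  convex_on C H ->
  cash_additive_on C H ->
  ((premium_principle C H /\ monotone_on C H) <->
   (H (fun _ => 0) = 0 /\
    (forall X, C X -> (forall w, X w <= 0) -> H X <= 0))).
Proof.
move=> [Cb Cc Cadd Cscal] Hconv Hcash; split.
  move=> [[_ H0 _] Hmon]; split => // X CX Xle.
  by rewrite -H0; apply: (Hmon) => //.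
move=> [H0 Hneg].
have Hmon : monotone_on C H.
  move=> X Y CX CY XY.
  have [_ [M HM]] := Cb Y CY.
  have YM : forall w, Y w <= M by move=> w; exact: le_trans (ler_norm _) (HM w).
  apply/ler_addgt0Pr => e e0.
  set K := `|M - H Y| + 1.
  have K0 : 0 < K by rewrite /K ltr_wpDl.
  set l := K / (e + K).
  have eK0 : 0 < e + K by rewrite addr_gt0.
  have l1 : 1 - l = e / (e + K).
    by rewrite /l; field; rewrite gt_eqF.
  have l1p : 0 < 1 - l by rewrite l1 divr_gt0.
  set Z := fun w => (1 - l)^-1 * (X w + (- l) * Y w).
  have CZ : C Z.
    by apply: (Cscal); apply: (Cadd) => //; apply: (Cscal).
  have ZM : forall w, Z w <= M.
    move=> w; rewrite /Z ler_pdivrMl //.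
    have := XY w; have := YM w.
    have : 0 < l by rewrite /l divr_gt0.
    move=> ? ? ?; nra.
  have HZ : H Z <= M.
    have CW : C (fun w => Z w + - M) by apply: (Cadd).
    have := Hneg _ CW (fun w => ltac:(have := ZM w; lra)).
    rewrite Hcash //; lra.
  have lr : 0 <= l <= 1.
    apply/andP; split; first by rewrite /l divr_ge0 // ltW.
    lra.
  have := Hconv Y Z l CY CZ lr.
  have -> : (fun w => l * Y w + (1 - l) * Z w) = X.
    apply: funext => w; rewrite /Z mulrA mulfV ?gt_eqF // mul1r; ring.
  move=> HX.
  have : (1 - l) * H Z <= (1 - l) * M by rewrite ler_pM2l.
  have : (1 - l) * (M - H Y) <= (1 - l) * K.
    by rewrite ler_pM2l // /K (le_trans (ler_norm _)) // lerDl.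
  have : (1 - l) * K <= e.
    by rewrite l1 mulrAC ler_pdivrMr // ler_pM2l // lerDr ltW.
  move=> ? ? ?; nra.
split => //; split => //.
move=> X CX Xge; rewrite -H0; apply: (Hmon) => //.
Time Qed.
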